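(* Let $A \in \mathbb{C}^{n \times n}$, and fix $A^-\in A\{1\}$ and $A^{GD}\in A\{GD\}$. For $X\in\mathbb{C}^{n\times n}$ the following are equivalent: (i) $X = A^{GD}AA^{-}$; (ii) $XAX=X$, $R(X)=R(A^{GD}A)$, and $N(X)=N(AA^{-})$; (iii) $XAX=X$, $XA=A^{GD}A$, and $AX=AA^{-}$.
   Context: For $A\in\mathbb{C}^{n\times n}$, $ind(A)$ is the smallest nonnegative integer $k$ with $\mathrm{rank}(A^k)=\mathrm{rank}(A^{k+1})$. $A\{1\}$ is the set of matrices $X$ with $AXA=A$. With $k=ind(A)$, $A\{GD\}$ is the set of G-Drazin inverses of $A$: matrices $X$ with $AXA=A$, $XA^{k+1}=A^k$, $A^{k+1}X=A^k$. $R(\cdot)$, $N(\cdot)$ denote range and null space. *)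

(* Defs.v *)
From HB Require Import structures.
From mathcomp Require Import all_boot all_order all_algebra.
From mathcomp Require Import complex.
From mathcomp Require Import reals Rstruct.
From Stdlib Require Import Reals.
Set Implicit Arguments. Unset Strict Implicit. Unset Printing Implicit Defensive.
Import Order.TTheory GRing.Theory Num.Theory.
Local Open Scope ring_scope.

Notation CC := (complex R).

(* k-th power of a square matrix (works for every n, including n = 0). *)
Definition mxpow {F : pzRingType} {n : nat} (A : 'M[F]_n) (k : nat) : 'M[F]_n :=
  iter k (mulmx A) 1%:M.

(* ind(A): the smallest k with rank(A^k) = rank(A^(k+1)); such a k always
   exists with k <= n, so searching in [0, n] finds the least one. *)
Definition ind {n : nat} (A : 'M[CC]_n) : nat :=
  find (fun k => \rank (mxpow A k) == \rank (mxpow A k.+1)) (iota 0 n.+1).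

Definition inner_inverse {n : nat} (A X : 'M[CC]_n) : Prop :=
  A *m X *m A = A.

Definition GD_inverse {n : nat} (A X : 'M[CC]_n) : Prop :=
  let k := ind A in
  [/\ A *m X *m A = A,
      X *m mxpow A k.+1 = mxpow A k &
      mxpow A k.+1 *m X = mxpow A k].

Definition in_range {n : nat} (X : 'M[CC]_n) (v : 'cV[CC]_n) : Prop :=
  exists w : 'cV[CC]_n, v = X *m w.
Definition in_null {n : nat} (X : 'M[CC]_n) (v : 'cV[CC]_n) : Prop :=
  X *m v = 0.

(* Main.v *)
Require Import Defs.
From mathcomp Require Import all_boot all_algebra complex reals Rstruct.
From Stdlib Require Import Reals.
Local Open Scope ring_scope.
Import GRing.Theory.

Lemma eq_by_vec n (P Q : 'M[CC]_n) : (forall v : 'cV[CC]_n, P *m v = Q *m v) -> P = Q.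
Proof.
move=> H; apply/matrixP => i j.
have := congr1 (fun M : 'cV[CC]_n => M i 0) (H (delta_mx j 0)).
by rewrite -!colE !mxE.
Qed.

Lemma i_iii n (A Am AGD X : 'M[CC]_n) :
  A *m Am *m A = A -> A *m AGD *m A = A -> X = AGD *m A *m Am ->
  [/\ X *m A *m X = X, X *m A = AGD *m A & A *m X = A *m Am].
Proof.
move=> h1 h2 ->.
have XA : AGD *m A *m Am *m A = AGD *m A by rewrite -!mulmxA (mulmxA A) h1.
have h2' : forall B : 'M[CC]_n, B *m A *m AGD *m A = B *m A.
  by move=> B; rewrite -!mulmxA (mulmxA A AGD A) h2.
split => //.
- by rewrite XA !mulmxA h2'.
- by rewrite !mulmxA h2.
Qed.

Section S.
Variables (n : nat) (A Am AGD X : 'M[CC]_n).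
Hypothesis h1 : A *m Am *m A = A.
Hypothesis h2 : A *m AGD *m A = A.

Lemma GAGA : AGD *m A *m (AGD *m A) = AGD *m A.
Proof. by rewrite -!mulmxA (mulmxA A AGD A) h2. Qed.

Lemma iii_ii : [/\ X *m A *m X = X, X *m A = AGD *m A & A *m X = A *m Am] ->
  [/\ X *m A *m X = X,
           (forall v, in_range X v <-> in_range (AGD *m A) v) &
           (forall v, in_null X v <-> in_null (A *m Am) v)].
Proof.
  case=> e1 e2 e3; split => // v; rewrite /in_range /in_null; split.
  - by case=> w ->; exists (X *m w); rewrite !mulmxA -e2 e1.
  - by case=> w ->; exists (A *m w); rewrite -e2 !mulmxA.
  - by move=> h; rewrite -e3 -mulmxA h mulmx0.
  - by move=> h; rewrite -e1 -(mulmxA X A X) e3 -mulmxA h mulmx0.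
Qed.

Lemma ii_i : [/\ X *m A *m X = X,
           (forall v, in_range X v <-> in_range (AGD *m A) v) &
           (forall v, in_null X v <-> in_null (A *m Am) v)] ->
           X = AGD *m A *m Am.
Proof.
  case=> e1 hr hn.
  have GAX : AGD *m A *m X = X.
    apply: eq_by_vec => v.
    have [w hw] : in_range (AGD *m A) (X *m v) by apply/hr; exists v.
    by rewrite -mulmxA hw mulmxA GAGA.
  have AX : A *m X = A *m Am.
    apply: eq_by_vec => v.
    have : in_null (A *m Am) (v - A *m X *m v).
      by apply/hn; rewrite /in_null mulmxBr !mulmxA e1 subrr.
    rewrite /in_null mulmxBr => /subr0_eq ->.
    by rewrite !mulmxA h1.
  by rewrite -GAX -mulmxA AX mulmxA.
Qed.

Lemma iii_i : [/\ X *m A *m X = X, X *m A = AGD *m A & A *m X = A *m Am] ->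
  X = AGD *m A *m Am.
Proof. case=> e1 e2 e3; by rewrite -e1 e2 -mulmxA e3 mulmxA. Qed.
End S.

Theorem theorem2p7 (n : nat) (A Am AGD X : 'M[CC]_n) :
  inner_inverse A Am -> GD_inverse A AGD ->
  [<-> X = AGD *m A *m Am;
       [/\ X *m A *m X = X,
           (forall v, in_range X v <-> in_range (AGD *m A) v) &
           (forall v, in_null X v <-> in_null (A *m Am) v)];
       [/\ X *m A *m X = X, X *m A = AGD *m A & A *m X = A *m Am]].
Proof.
move=> h1 [h2 _ _].
have i3 := @i_iii _ A Am AGD X h1 h2.
have p1 := @iii_ii _ A Am AGD X.
have p2 := @ii_i _ A Am AGD X h1 h2.
have p3 := @iii_i _ A Am AGD X.
tfae.
- by move=> h; apply: p1; apply: i3.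
- by move=> h; apply: i3; apply: p2.
- exact: p3.
Qed.
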